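(* Let $R$ be a ring, $S$ a left Ore set of $R$, and $\mathfrak{a}=\mathrm{ass}_R(S)$. Then \begin{enumerate} \item $S$ is a left localizable set of $R$ if and only if ${}'\mathfrak{a}\neq R$, where ${}'\mathfrak{a}={}'\mathfrak{a}(S)$. \item Suppose ${}'\mathfrak{a}\neq R$. Let ${}'\pi:R\to{}'R:=R/{}'\mathfrak{a}$, $r\mapsto{}'r=r+{}'\mathfrak{a}$, and ${}'S={}'\pi(S)$. Then \begin{enumerate} \item ${}'S$ is a left denominator set of ${}'R$ contained in ${}'\mathcal{C}_{{}'R}$; \item $\mathfrak{a}={}'\pi^{-1}(\mathrm{ass}_l({}'S))$; \item $R\langle S^{-1}\rangle\simeq {}'S^{-1}\,{}'R$, an $R$-isomorphism. \end{enumerate} \end{enumerate}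
   Context: Rings are associative with $1$. A multiplicative set $S$: $SS\subseteq S$, $1\in S$, $0\notin S$. $R\langle S^{-1}\rangle=R\langle X_S\rangle/I_S$, where $R\langle X_S\rangle$ is freely generated by $R$ and noncommuting indeterminates $x_s$ ($s\in S$) and $I_S$ is generated by $sx_s-1,x_ss-1$; $\mathrm{ass}_R(S)$ is the kernel of $R\to R\langle S^{-1}\rangle$. $S$ is left localizable if $R\langle S^{-1}\rangle\ne0$ and every element is of the form $(x_s+I_S)(r+I_S)$, $s\in S$, $r\in R$. Left Ore set: $Sr\cap Rs\ne\emptyset$ for all $r\in R$, $s\in S$. Left denominator set: left Ore and $rs=0$ ($s\in S$) implies $tr=0$ for some $t\in S$; $T^{-1}A$ is the Ore localization. For a ring $A$, ${}'\mathcal{C}_A=\{r\in A: xr=0\Rightarrow x=0\}$; $\mathrm{ass}_l(T)=\{a\in A: ta=0\text{ for some } t\in T\}$. ${}'\mathfrak{a}(S)$ is the least ideal $\mathfrak{b}$ of $R$ such that the image of $S$ in $R/\mathfrak{b}$ is contained in ${}'\mathcal{C}_{R/\mathfrak{b}}$ (it exists). An $R$-isomorphism is an isomorphism compatible with the structure maps from $R$. *)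

(* Defs.v *)
From HB Require Import structures.
From mathcomp Require Import all_boot all_algebra.
Set Implicit Arguments. Unset Strict Implicit. Unset Printing Implicit Defensive.
Import GRing.Theory.
Local Open Scope ring_scope.

Definition is_unit (A : pzRingType) (x : A) : Prop :=
  exists y : A, x * y = 1 /\ y * x = 1.

Definition mult_set (A : pzRingType) (S : A -> Prop) : Prop :=
  [/\ S 1, ~ S 0 & forall a b, S a -> S b -> S (a * b)].

Definition left_Ore_set (A : pzRingType) (S : A -> Prop) : Prop :=
  mult_set S /\
  forall (r s : A), S s -> exists s' r' : A, S s' /\ s' * r = r' * s.

Definition left_denom_set (A : pzRingType) (S : A -> Prop) : Prop :=
  left_Ore_set S /\
  forall (r s : A), S s -> r * s = 0 -> exists t : A, S t /\ t * r = 0.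

Definition lC (A : pzRingType) (r : A) : Prop := forall x : A, x * r = 0 -> x = 0.

Definition ass_l (A : pzRingType) (T : A -> Prop) (a : A) : Prop :=
  exists t : A, T t /\ t * a = 0.

Definition is_ideal (A : pzRingType) (b : A -> Prop) : Prop :=
  [/\ b 0, (forall x y, b x -> b y -> b (x + y)), (forall x, b x -> b (- x))
    & forall r x, b x -> b (r * x) /\ b (x * r)].

(* the image of S in A/b is contained in 'C_{A/b}:
   (x + b)(s + b) = 0 in A/b implies x + b = 0, i.e. x s ∈ b -> x ∈ b *)
Definition S_in_C_mod (A : pzRingType) (S : A -> Prop) (b : A -> Prop) : Prop :=
  forall s, S s -> forall x, b (x * s) -> b x.

(* 'a(S): the least ideal b with image of S in 'C_{A/b}; realized as the
   intersection of all such ideals (which is again such an ideal). *)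
Definition a_prime (A : pzRingType) (S : A -> Prop) (r : A) : Prop :=
  forall b : A -> Prop, is_ideal b -> S_in_C_mod S b -> b r.

(* R<S^{-1}> = R<X_S>/I_S, described by its universal property:
   f : R -> L inverts S, and every ring map inverting S factors uniquely. *)
Definition is_univ_loc (A : pzRingType) (S : A -> Prop) (L : pzRingType)
    (f : {rmorphism A -> L}) : Prop :=
  (forall s, S s -> is_unit (f s)) /\
  forall (B : pzRingType) (g : {rmorphism A -> B}),
    (forall s, S s -> is_unit (g s)) ->
    exists h : {rmorphism L -> B},
      (forall r, h (f r) = g r) /\
      forall h' : {rmorphism L -> B}, (forall r, h' (f r) = g r) -> forall x, h' x = h x.

Definition left_localizable (A : pzRingType) (S : A -> Prop) (L : pzRingType)
    (f : {rmorphism A -> L}) : Prop :=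
  (1 : L) <> 0 /\
  forall q : L, exists (s r : A) (y : L),
    [/\ S s, y * f s = 1, f s * y = 1 & q = y * f r].

Definition is_left_Ore_loc (A : pzRingType) (T : A -> Prop) (Q : pzRingType)
    (g : {rmorphism A -> Q}) : Prop :=
  [/\ (forall t, T t -> is_unit (g t)),
      (forall q : Q, exists (t a : A) (y : Q),
          [/\ T t, y * g t = 1, g t * y = 1 & q = y * g a])
    & forall a, g a = 0 <-> ass_l T a].

Definition img (A B : Type) (p : A -> B) (S : A -> Prop) (y : B) : Prop :=
  exists s, S s /\ p s = y.

(* Main.v *)
From HB Require Import structures.
From mathcomp Require Import all_boot all_algebra.
From mathcomp Require boolp.
From Stdlib Require Import ClassicalEpsilon ProofIrrelevance FunctionalExtensionality PropExtensionality.
Require Import Defs.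
Import GRing.Theory.
Local Open Scope ring_scope.

Ltac sh := match goal with |- ?G => idtac G end.
Section OreModel.
Variables (R : pzRingType) (S K : R -> Prop).
Hypothesis HS1 : S 1.
Hypothesis HSM : forall a b, S a -> S b -> S (a * b).
Hypothesis HOre : forall r s, S s -> exists s' r', S s' /\ s' * r = r' * s.
Hypothesis HK : is_ideal K.
Hypothesis HK2 : forall s x, S s -> K (x * s) -> K x.
Hypothesis HK3 : forall s x, S s -> K (s * x) -> K x.

Definition eqv (x y : R) := K (x - y).

Lemma K0 : K 0. Proof. by case: HK. Qed.
Lemma KD {x y} : K x -> K y -> K (x + y). Proof. by case: HK => _ H _ _; apply: H. Qed.
Lemma KN {x} : K x -> K (- x). Proof. by case: HK => _ _ H _; apply: H. Qed.
Lemma KMl r x : K x -> K (r * x). Proof. by case: HK => _ _ _ H Kx; case: (H r x Kx). Qed.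
Lemma KMr r x : K x -> K (x * r). Proof. by case: HK => _ _ _ H Kx; case: (H r x Kx). Qed.

Lemma eqv_eq {x y} : x = y -> eqv x y. Proof. by move=> ->; rewrite /eqv subrr; apply: K0. Qed.
Lemma eqv_sym {x y} : eqv x y -> eqv y x. Proof. by rewrite /eqv => /KN; rewrite opprB. Qed.
Lemma eqv_trans {x y z} : eqv x y -> eqv y z -> eqv x z.
Proof. by rewrite /eqv => H1 H2; have := KD H1 H2; rewrite addrA subrK. Qed.
Lemma eqv_add {x x' y y'} : eqv x x' -> eqv y y' -> eqv (x + y) (x' + y').
Proof.
rewrite /eqv => H1 H2; have := KD H1 H2.
by rewrite opprD addrACA.
Qed.
Lemma eqv_opp {x y} : eqv x y -> eqv (- x) (- y).
Proof. by rewrite /eqv => /KN; rewrite opprB opprK addrC. Qed.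
Lemma eqv_mull r {x y} : eqv x y -> eqv (r * x) (r * y).
Proof. by rewrite /eqv => /(KMl r); rewrite mulrBr. Qed.
Lemma eqv_mulr r {x y} : eqv x y -> eqv (x * r) (y * r).
Proof. by rewrite /eqv => /(KMr r); rewrite mulrBl. Qed.
Lemma eqv_cancelr {s x y} : S s -> eqv (x * s) (y * s) -> eqv x y.
Proof. by rewrite /eqv -mulrBl; apply: HK2. Qed.
Lemma eqv_cancell {s x y} : S s -> eqv (s * x) (s * y) -> eqv x y.
Proof. by rewrite /eqv -mulrBr; apply: HK3. Qed.

Definition Phi (s a x y : R) : Prop :=
  forall c d, eqv (c * s) (d * x) -> eqv (c * a) (d * y).

Lemma Phi_sym {s a t b} : Phi s a t b -> Phi t b s a.
Proof. by move=> H c d /eqv_sym /H /eqv_sym. Qed.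

Lemma Phi_trans {s a t b x y} : S t -> Phi s a t b -> Phi t b x y -> Phi s a x y.
Proof.
move=> St H1 H2 c d Hcd.
have [v [w [Sv Evw]]] := HOre (c * s) t St.
apply: (eqv_cancell Sv).
have E1 : eqv (v * c * a) (w * b).
  by apply: H1; rewrite -mulrA Evw; exact: eqv_eq.
have E2 : eqv (w * b) (v * d * y).
  apply: H2; rewrite -Evw -mulrA; exact: eqv_mull.
by rewrite !mulrA; apply: eqv_trans E1 E2.
Qed.

Lemma Phi_intro {s a t b c d} : S s -> S t -> S (c * s) -> eqv (c * s) (d * t) ->
  eqv (c * a) (d * b) -> Phi s a t b.
Proof.
move=> Ss St Scs Ecd Eab c' d' H.
have [e [g [Se Eeg]]] := HOre (c' * s) (c * s) Scs.
have E1 : eqv (e * c') (g * c).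
  by apply: (eqv_cancelr Ss); apply: eqv_eq; rewrite -!mulrA.
have E2 : eqv (e * d') (g * d).
  apply: (eqv_cancelr St); rewrite -!mulrA.
  apply: eqv_trans (eqv_mull e (eqv_sym H)) _.
  by rewrite Eeg; apply: eqv_mull.
apply: (eqv_cancell Se); rewrite !mulrA.
apply: eqv_trans (eqv_mulr a E1) _.
rewrite -!mulrA; apply: eqv_trans (eqv_mull g Eab) _.
by rewrite !mulrA; apply: eqv_mulr; apply: eqv_sym.
Qed.

Lemma Phi_refl {s} a : S s -> Phi s a s a.
Proof.
move=> Ss; apply: (@Phi_intro _ _ _ _ 1 1) => //; rewrite ?mul1r //; exact: eqv_eq.
Qed.


Definition fracP (s a : R) : R -> R -> Prop :=
  if excluded_middle_informative (S s) then Phi s a else Phi 1 0.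

Record Q := MkQ { qP : R -> R -> Prop ;
                  qH : exists p : R * R, S p.1 /\ qP = Phi p.1 p.2 }.

Lemma fracH s a : exists p : R * R, S p.1 /\ fracP s a = Phi p.1 p.2.
Proof.
rewrite /fracP; case: excluded_middle_informative => H.
  by exists (s, a).
by exists (1, 0).
Qed.

Definition frac s a := @MkQ (fracP s a) (fracH s a).

Lemma Q_eq (q1 q2 : Q) : qP q1 = qP q2 -> q1 = q2.
Proof.
case: q1 q2 => P1 H1 [P2 H2] /= E; subst P2.
by rewrite (proof_irrelevance _ H1 H2).
Qed.

Lemma fracE s a : S s -> qP (frac s a) = Phi s a.
Proof. by move=> Ss; rewrite /= /fracP; case: excluded_middle_informative. Qed.

Lemma frac_eq {s a t b} c d : S s -> S t -> S (c * s) -> eqv (c * s) (d * t) ->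
  eqv (c * a) (d * b) -> frac s a = frac t b.
Proof.
move=> Ss St Scs E1 E2; apply: Q_eq; rewrite !fracE //.
have P := Phi_intro Ss St Scs E1 E2.
apply: functional_extensionality => x; apply: functional_extensionality => y.
apply: propositional_extensionality; split => H.
  exact: (Phi_trans Ss (Phi_sym P) H).
exact: (Phi_trans St P H).
Qed.

Lemma frac_inv {s a t b} : S s -> S t -> frac s a = frac t b -> Phi s a t b.
Proof.
move=> Ss St E.
have : qP (frac s a) t b = qP (frac t b) t b by rewrite E.
by rewrite !fracE // => ->; apply: Phi_refl.
Qed.

Lemma qind q : exists s a, S s /\ q = frac s a.
Proof.
case: q => P [[s a] /= [Ss E]]; exists s, a; split => //.
by apply: Q_eq; rewrite fracE //.
Qed.

Definition repP (q : Q) : R * R :=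
  epsilon (inhabits (1, 0)) (fun p => S p.1 /\ q = frac p.1 p.2).
Lemma repP_spec q : S (repP q).1 /\ q = frac (repP q).1 (repP q).2.
Proof.
rewrite /repP; apply epsilon_spec.
by have [s [a [Ss E]]] := qind q; exists (s, a).
Qed.

Definition orep (r s : R) : R * R :=
  epsilon (inhabits (1, 0)) (fun p => S p.1 /\ p.1 * r = p.2 * s).
Lemma orep_spec r {s} : S s -> S (orep r s).1 /\ (orep r s).1 * r = (orep r s).2 * s.
Proof.
move=> Ss; rewrite /orep; apply epsilon_spec.
by have [s' [r' [Ss' E]]] := HOre r s Ss; exists (s', r').
Qed.

Definition qadd (q1 q2 : Q) : Q :=
  let p1 := repP q1 in let p2 := repP q2 in let o := orep p1.1 p2.1 in
  frac (o.1 * p1.1) (o.1 * p1.2 + o.2 * p2.2).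
Definition qmul (q1 q2 : Q) : Q :=
  let p1 := repP q1 in let p2 := repP q2 in let o := orep p1.2 p2.1 in
  frac (o.1 * p1.1) (o.2 * p2.2).
Definition qopp (q : Q) : Q := frac (repP q).1 (- (repP q).2).
Definition qzero : Q := frac 1 0.
Definition qone : Q := frac 1 1.

Lemma qadd_frac s a t b c d : S s -> S t -> S c -> c * s = d * t ->
  qadd (frac s a) (frac t b) = frac (c * s) (c * a + d * b).
Proof.
move=> Ss St Sc Ecd; rewrite /qadd.
move: (repP_spec (frac s a)); case: (repP (frac s a)) => s0 a0 /= [S0 E0].
move: (repP_spec (frac t b)); case: (repP (frac t b)) => t0 b0 /= [T0 F0].
move: (orep_spec s0 T0); case: (orep s0 t0) => c0 d0 /= [Sc0 E].
have P0 := frac_inv S0 Ss (esym E0).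
have P1 := frac_inv T0 St (esym F0).
have Scs := HSM _ _ Sc Ss.
have [e [g [Se Eeg]]] := HOre (c0 * s0) (c * s) Scs.
apply: (frac_eq e g); rewrite ?mulrDr //; try by repeat apply: HSM.
  exact: eqv_eq.
apply: eqv_add.
  rewrite !mulrA; apply: P0; rewrite -!mulrA; exact: eqv_eq.
rewrite !mulrA; apply: P1; rewrite -!mulrA -E Eeg Ecd; exact: eqv_eq.
Qed.

Lemma qmul_frac {s a t b t' a'} : S s -> S t -> S t' -> t' * a = a' * t ->
  qmul (frac s a) (frac t b) = frac (t' * s) (a' * b).
Proof.
move=> Ss St St' Et; rewrite /qmul.
move: (repP_spec (frac s a)); case: (repP (frac s a)) => s0 a0 /= [S0 E0].
move: (repP_spec (frac t b)); case: (repP (frac t b)) => t0 b0 /= [T0 F0].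
move: (orep_spec a0 T0); case: (orep a0 t0) => u0 v0 /= [Su0 E].
have P0 := frac_inv S0 Ss (esym E0).
have P1 := frac_inv T0 St (esym F0).
have Sts := HSM _ _ St' Ss.
have [e [g [Se Eeg]]] := HOre (u0 * s0) (t' * s) Sts.
apply: (frac_eq e g); rewrite //; try by repeat apply: HSM.
  exact: eqv_eq.
rewrite !mulrA; apply: P1.
have H : eqv (e * u0 * a0) (g * t' * a).
  by apply: P0; rewrite -!mulrA; exact: eqv_eq.
by move: H; rewrite -!mulrA E Et.
Qed.

Lemma qopp_frac s a : S s -> qopp (frac s a) = frac s (- a).
Proof.
move=> Ss; rewrite /qopp.
move: (repP_spec (frac s a)); case: (repP (frac s a)) => s0 a0 /= [S0 E0].
have P0 := frac_inv S0 Ss (esym E0).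
have [e [g [Se Eeg]]] := HOre s0 s Ss.
apply: (frac_eq e g); rewrite //; try by repeat apply: HSM.
  exact: eqv_eq.
by rewrite !mulrN; apply: eqv_opp; apply: P0; apply: eqv_eq.
Qed.

Lemma frac_exp s a u c : S s -> S u -> u = c * s -> frac s a = frac u (c * a).
Proof.
move=> Ss Su Eu; apply: (frac_eq c 1) => //; rewrite ?mul1r -?Eu //;
  exact: eqv_eq.
Qed.

Lemma qadd_same u x y : S u -> qadd (frac u x) (frac u y) = frac u (x + y).
Proof. by move=> Su; rewrite (@qadd_frac _ _ _ _ 1 1) ?mul1r. Qed.

Lemma qcommon2 q1 q2 : exists u x y, [/\ S u, q1 = frac u x & q2 = frac u y].
Proof.
have [s [a [Ss ->]]] := qind q1; have [t [b [St ->]]] := qind q2.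
have [c [d [Sc E]]] := HOre s t St.
exists (c * s), (c * a), (d * b); split; first by repeat apply: HSM.
all: by apply: frac_exp => //; repeat apply: HSM.
Qed.

Lemma qcommon3 q1 q2 q3 : exists u x y z,
  [/\ S u, q1 = frac u x, q2 = frac u y & q3 = frac u z].
Proof.
have [u [x [y [Su -> ->]]]] := qcommon2 q1 q2.
have [t [b [St ->]]] := qind q3.
have [c [d [Sc E]]] := HOre u t St.
exists (c * u), (c * x), (c * y), (d * b); split; first by repeat apply: HSM.
all: by rewrite ?mulrA; apply: frac_exp => //; repeat apply: HSM.
Qed.


Ltac sS := by repeat apply: HSM.

Lemma qaddA : associative qadd.
Proof.
move=> q1 q2 q3; have [u [x [y [z [Su -> -> ->]]]]] := qcommon3 q1 q2 q3.
by rewrite !qadd_same // addrA.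
Qed.

Lemma qaddC : commutative qadd.
Proof.
move=> q1 q2; have [u [x [y [Su -> ->]]]] := qcommon2 q1 q2.
by rewrite !qadd_same // addrC.
Qed.

Lemma frac0 {u} : S u -> frac u 0 = qzero.
Proof. by move=> Su; rewrite /qzero (@frac_exp 1 0 u u) ?mulr1 ?mulr0. Qed.

Lemma qadd0 : left_id qzero qadd.
Proof.
move=> q; have [u [x [Su ->]]] := qind q.
by rewrite -(frac0 Su) qadd_same // add0r.
Qed.

Lemma qaddN : left_inverse qzero qopp qadd.
Proof.
move=> q; have [u [x [Su ->]]] := qind q.
by rewrite qopp_frac // qadd_same // addNr frac0.
Qed.

Lemma qmulA : associative qmul.
Proof.
move=> q1 q2 q3.
have [s [a [Ss ->]]] := qind q1; have [t [b [St ->]]] := qind q2.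
have [v [e [Sv ->]]] := qind q3.
have [v1 [b' [Sv1 E1]]] := HOre b v Sv.
have Sv1t : S (v1 * t) by sS.
have [w [a2 [Sw E2]]] := HOre a (v1 * t) Sv1t.
rewrite (qmul_frac _ _ Sv1 E1) // (qmul_frac _ _ Sw E2) //.
rewrite (@qmul_frac s a t b w (a2 * v1)) -?mulrA //.
rewrite (@qmul_frac _ _ v e 1 (a2 * b')) ?mul1r ?mulrA //; first sS.
by rewrite -!mulrA E1.
Qed.

Lemma qmul1 : left_id qone qmul.
Proof.
move=> q; have [t [b [St ->]]] := qind q.
by rewrite /qone (@qmul_frac _ _ _ _ t 1) ?mulr1 ?mul1r.
Qed.

Lemma qmul1r : right_id qone qmul.
Proof.
move=> q; have [s [a [Ss ->]]] := qind q.
by rewrite /qone (@qmul_frac _ _ _ _ 1 a) ?mulr1 ?mul1r.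
Qed.

Lemma qmulDl : left_distributive qmul qadd.
Proof.
move=> q1 q2 q3; have [u [x [y [Su -> ->]]]] := qcommon2 q1 q2.
have [t [b [St ->]]] := qind q3.
have [t1 [x' [St1 E1]]] := HOre x t St.
have [t2 [y' [St2 E2]]] := HOre (t1 * y) t St.
have ST : S (t2 * t1) by sS.
rewrite qadd_same // (@qmul_frac _ _ _ _ (t2 * t1) (t2 * x' + y')) //; last first.
  by rewrite mulrDr mulrDl -!mulrA E1 E2 !mulrA.
rewrite (@qmul_frac _ _ _ _ (t2 * t1) (t2 * x')) //; last by rewrite -!mulrA E1.
rewrite (@qmul_frac _ _ _ _ (t2 * t1) y') //; last by rewrite -!mulrA E2.
by rewrite qadd_same ?mulrDl //; sS.
Qed.

Lemma qmulDr : right_distributive qmul qadd.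
Proof.
move=> q1 q2 q3; have [t [b [e [St -> ->]]]] := qcommon2 q2 q3.
have [s [a [Ss ->]]] := qind q1.
have [t' [a' [St' E]]] := HOre a t St.
rewrite qadd_same // !(qmul_frac _ _ St' E) //.
by rewrite qadd_same ?mulrDr //; sS.
Qed.

HB.instance Definition _ := boolp.gen_eqMixin Q.
HB.instance Definition _ := boolp.gen_choiceMixin Q.
HB.instance Definition _ := GRing.isPzRing.Build Q
  qaddA qaddC qadd0 qaddN qmulA qmul1 qmul1r qmulDl qmulDr.


Definition qphi (r : R) : Q := frac 1 r.

Lemma qphi_zmod : zmod_morphism qphi.
Proof.
move=> x y; rewrite /qphi.
change (frac 1 (x - y) = qadd (frac 1 x) (qopp (frac 1 y))).
by rewrite qopp_frac // qadd_same.
Qed.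

Lemma qphi_monoid : monoid_morphism qphi.
Proof.
split => // x y; rewrite /qphi.
change (frac 1 (x * y) = qmul (frac 1 x) (frac 1 y)).
by rewrite (@qmul_frac _ _ _ _ 1 x) ?mul1r ?mulr1.
Qed.

HB.instance Definition _ := GRing.isZmodMorphism.Build R Q qphi qphi_zmod.
HB.instance Definition _ := GRing.isMonoidMorphism.Build R Q qphi qphi_monoid.

Lemma ore_model : exists (B : pzRingType) (phi : {rmorphism R -> B}),
  (forall s, S s -> is_unit (phi s)) /\ (forall r, phi r = 0 -> K r).
Proof.
exists Q, qphi; split.
  move=> s Ss; exists (frac s 1); split.
    change (qmul (frac 1 s) (frac s 1) = frac 1 1).
    by rewrite (@qmul_frac _ _ _ _ 1 1) ?mul1r.
  change (qmul (frac s 1) (frac 1 s) = frac 1 1).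
  rewrite (@qmul_frac _ _ _ _ 1 1) ?mul1r ?mulr1 //.
  by rewrite (@frac_exp 1 1 s s) ?mulr1.
move=> r; change (frac 1 r = frac 1 0 -> K r) => /(frac_inv HS1 HS1) P.
have := P 1 1 (eqv_eq erefl).
by rewrite /eqv !mul1r subr0.
Qed.

End OreModel.
Section SubL.
Variables (R : pzRingType) (S : R -> Prop) (L : pzRingType) (f : {rmorphism R -> L}).
Hypothesis HS1 : S 1.
Hypothesis HSM : forall a b, S a -> S b -> S (a * b).
Hypothesis HOre : forall r s, S s -> exists s' r', S s' /\ s' * r = r' * s.
Hypothesis Hunit : forall s, S s -> is_unit (f s).

Definition PL (q : L) : Prop := exists (s r : R) (y : L),
    [/\ S s, y * f s = 1, f s * y = 1 & q = y * f r].

Lemma inv_right (s : R) (y : L) (z : L) : y * f s = 1 -> f s * z = 1 -> y = z.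
Proof. by move=> H1 H2; rewrite -[y]mulr1 -H2 mulrA H1 mul1r. Qed.

Lemma PL0 : PL 0.
Proof. by exists 1, 0, 1; rewrite rmorph1 rmorph0 !mulr1 mul1r. Qed.
Lemma PL1 : PL 1.
Proof. by exists 1, 1, 1; rewrite rmorph1 !mulr1. Qed.
Lemma PLN {x} : PL x -> PL (- x).
Proof.
by case=> s [r [y [Ss H1 H2 ->]]]; exists s, (- r), y; rewrite rmorphN mulrN.
Qed.
Lemma PLD {x x'} : PL x -> PL x' -> PL (x + x').
Proof.
case=> s [r [y [Ss H1 H2 ->]]] [s' [r' [y' [Ss' H1' H2' ->]]]].
have [c [d [Sc E]]] := HOre s s' Ss'.
have Su : S (c * s) by apply: HSM.
have [yu [Hu1 Hu2]] := Hunit _ Su.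
have Ey : y = yu * f c.
  by rewrite -[LHS]mul1r -Hu2 rmorphM -!mulrA H2 mulr1.
have Ey' : y' = yu * f d.
  by rewrite -[LHS]mul1r -Hu2 E rmorphM -!mulrA H2' mulr1.
exists (c * s), (c * r + d * r'), yu; split => //.
by rewrite Ey Ey' rmorphD !rmorphM mulrDr !mulrA.
Qed.
Lemma PLM {x x'} : PL x -> PL x' -> PL (x * x').
Proof.
case=> s [r [y [Ss H1 H2 ->]]] [s' [r' [y' [Ss' H1' H2' ->]]]].
have [t [r1 [St E]]] := HOre r s' Ss'.
have [yt [Ht2 Ht1]] := Hunit _ St.
have E2 : f r * y' = yt * f r1.
  by rewrite -[LHS]mul1r -Ht1 -!mulrA [f t * _]mulrA -rmorphM E rmorphM -mulrA H2' mulr1.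
exists (t * s), (r1 * r'), (y * yt); split.
- exact: HSM.
- by rewrite rmorphM mulrA -[y * yt * f t]mulrA Ht1 mulr1 H1.
- by rewrite rmorphM -mulrA [f s * _]mulrA H2 mul1r Ht2.
by rewrite -mulrA [f r * _]mulrA E2 rmorphM !mulrA.
Qed.

Record L0 := MkL0 { lv : L; lp : PL lv }.

Lemma lv_inj (x y : L0) : lv x = lv y -> x = y.
Proof.
case: x y => a Ha [b Hb] /= E; subst b.
by rewrite (proof_irrelevance _ Ha Hb).
Qed.

Definition l0add (x y : L0) := @MkL0 _ (PLD (lp x) (lp y)).
Definition l0mul (x y : L0) := @MkL0 _ (PLM (lp x) (lp y)).
Definition l0opp (x : L0) := @MkL0 _ (PLN (lp x)).
Definition l0zero := @MkL0 _ PL0.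
Definition l0one := @MkL0 _ PL1.

Lemma l0addA : associative l0add.
Proof. by move=> *; apply: lv_inj; rewrite /= addrA. Qed.
Lemma l0addC : commutative l0add.
Proof. by move=> *; apply: lv_inj; rewrite /= addrC. Qed.
Lemma l0add0 : left_id l0zero l0add.
Proof. by move=> *; apply: lv_inj; rewrite /= add0r. Qed.
Lemma l0addN : left_inverse l0zero l0opp l0add.
Proof. by move=> *; apply: lv_inj; rewrite /= addNr. Qed.
Lemma l0mulA : associative l0mul.
Proof. by move=> *; apply: lv_inj; rewrite /= mulrA. Qed.
Lemma l0mul1 : left_id l0one l0mul.
Proof. by move=> *; apply: lv_inj; rewrite /= mul1r. Qed.
Lemma l0mul1r : right_id l0one l0mul.
Proof. by move=> *; apply: lv_inj; rewrite /= mulr1. Qed.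
Lemma l0mulDl : left_distributive l0mul l0add.
Proof. by move=> *; apply: lv_inj; rewrite /= mulrDl. Qed.
Lemma l0mulDr : right_distributive l0mul l0add.
Proof. by move=> *; apply: lv_inj; rewrite /= mulrDr. Qed.

HB.instance Definition _ := boolp.gen_eqMixin L0.
HB.instance Definition _ := boolp.gen_choiceMixin L0.
HB.instance Definition _ := GRing.isPzRing.Build L0
  l0addA l0addC l0add0 l0addN l0mulA l0mul1 l0mul1r l0mulDl l0mulDr.

Lemma lv_zmod : zmod_morphism lv. Proof. by []. Qed.
Lemma lv_monoid : monoid_morphism lv. Proof. by []. Qed.
HB.instance Definition _ := GRing.isZmodMorphism.Build L0 L lv lv_zmod.
HB.instance Definition _ := GRing.isMonoidMorphism.Build L0 L lv lv_monoid.

Lemma PLf r : PL (f r).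
Proof. by exists 1, r, 1; rewrite rmorph1 !mulr1 mul1r. Qed.
Definition gL (r : R) : L0 := @MkL0 _ (PLf r).
Lemma gL_zmod : zmod_morphism gL.
Proof. by move=> x y; apply: lv_inj; rewrite /= rmorphB. Qed.
Lemma gL_monoid : monoid_morphism gL.
Proof. by split; [|move=> x y]; apply: lv_inj; rewrite /= ?rmorph1 ?rmorphM. Qed.
HB.instance Definition _ := GRing.isZmodMorphism.Build R L0 gL gL_zmod.
HB.instance Definition _ := GRing.isMonoidMorphism.Build R L0 gL gL_monoid.

Lemma univ_form : is_univ_loc S f -> forall x, PL x.
Proof.
case=> _ U.
have gunit : forall s, S s -> is_unit (gL s).
  move=> s Ss; have [y [H1 H2]] := Hunit _ Ss.
  have Py : PL y by exists s, 1, y; rewrite rmorph1 mulr1; split.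
  by exists (@MkL0 _ Py); split; apply: lv_inj.
have [h0 [Hh0 _]] := U L0 gL gunit.
have [h [Hh Uh]] := U L f Hunit.
have E1 := Uh idfun (fun r => erefl).
have E2 := Uh (lv \o h0) (fun r => congr1 lv (Hh0 r)).
move=> x; have := lp (h0 x).
by have -> : lv (h0 x) = x by rewrite -[RHS]/(idfun x) E1 -E2.
Qed.

End SubL.

Theorem theorem1p5 (R : nzRingType) (S : R -> Prop)
    (L : pzRingType) (f : {rmorphism R -> L}) :
  left_Ore_set S -> is_univ_loc S f ->
  (left_localizable S f <-> ~ (forall r : R, a_prime S r)) /\
  (~ (forall r : R, a_prime S r) ->
   forall (R' : pzRingType) (pi : {rmorphism R -> R'}),
     (forall y : R', exists r : R, pi r = y) ->
     (forall r : R, pi r = 0 <-> a_prime S r) ->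
     [/\ left_denom_set (img pi S) /\ (forall y, img pi S y -> lC y),
         (forall r : R, f r = 0 <-> ass_l (img pi S) (pi r))
       & forall (Q : pzRingType) (g : {rmorphism R' -> Q}),
           is_left_Ore_loc (img pi S) g ->
           exists h : {rmorphism L -> Q},
             bijective h /\ forall r : R, h (f r) = g (pi r)]).
Proof.
move=> [[S1 S0 SM] Ore] HU.
have Hunit : forall s, S s -> is_unit (f s) by case: HU.
set a' := a_prime S.
have aI : is_ideal a'.
  split.
  - by move=> b [] .
  - by move=> x y Hx Hy b Hb Hc; case: (Hb) => _ Hadd _ _; apply: Hadd; [apply: Hx|apply: Hy].
  - by move=> x Hx b Hb Hc; case: (Hb) => _ _ Hopp _; apply: Hopp; apply: Hx.
  - move=> r x Hx; split=> b Hb Hc; case: (Hb) => _ _ _ Hm; have := Hm r x (Hx b Hb Hc); case=> //.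
have aC : S_in_C_mod S a'.
  by move=> s Ss x Hxs b Hb Hc; apply: (Hc s Ss x); apply: Hxs.
have aker : forall r, a' r -> f r = 0.
  move=> r Hr; apply: (Hr (fun r => f r = 0)).
    split.
    - exact: rmorph0.
    - by move=> x y Hx Hy; rewrite rmorphD Hx Hy addr0.
    - by move=> x Hx; rewrite rmorphN Hx oppr0.
    - by move=> r0 x Hx; rewrite !rmorphM Hx mulr0 mul0r.
  move=> s Ss x Hx; have [y [H1 H2]] := Hunit s Ss.
  by rewrite -[f x]mulr1 -H1 mulrA -rmorphM Hx mul0r.
set K := fun r => exists s, S s /\ a' (s * r).
case: (aI) => a0 aD aN aM.
have KI : is_ideal K.
  split.
  - by exists 1; rewrite mulr0.
  - move=> x y [s [Ss Hx]] [t [St Hy]].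
    have [c [d [Sc E]]] := Ore s t St.
    exists (c * s); split; first exact: SM.
    rewrite mulrDr {2}E -!mulrA; apply: aD.
      by case: (aM c _ Hx).
    by case: (aM d _ Hy).
  - by move=> x [s [Ss Hx]]; exists s; rewrite mulrN; split => //; apply: aN.
  - move=> r x [s [Ss Hx]]; split.
      have [s' [r' [Ss' E]]] := Ore r s Ss.
      exists s'; split => //; rewrite mulrA E -mulrA.
      by case: (aM r' _ Hx).
    exists s; split => //; rewrite mulrA.
    by case: (aM r _ Hx).
have K2 : forall s x, S s -> K (x * s) -> K x.
  move=> s x Ss [u [Su Hu]]; exists u; split => //.
  by apply: (aC s Ss); rewrite -mulrA.
have K3 : forall s x, S s -> K (s * x) -> K x.
  move=> s x Ss [u [Su Hu]]; exists (u * s); split; first exact: SM.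
  by rewrite -mulrA.
have [B [phi [phiU phiK]]] := @ore_model _ S K S1 SM Ore KI K2 K3.
have [h [Hh _]] := HU.2 B phi phiU.
have kerf : forall r, f r = 0 -> K r.
  by move=> r Hr; apply: phiK; rewrite -Hh Hr rmorph0.
have notK1 : ~ (forall r, a' r) -> ~ K 1.
  move=> Hna [s [Ss Hs]]; apply: Hna => x; apply: (aC s Ss).
  by rewrite mulr1 in Hs; case: (aM x _ Hs).
have form := @univ_form _ S _ f S1 SM Ore Hunit HU.
split.
  split.
    move=> [H10 _] Hall; apply: H10.
    by have := aker 1 (Hall 1); rewrite rmorph1.
  move=> Hna; split; last exact: form.
  move=> H10; apply: (notK1 Hna); apply: kerf.
  by rewrite rmorph1 H10.
move=> Hna R' pi Hsurj Hker.
have HlC : forall y, img pi S y -> lC y.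
  move=> y [s [Ss <-]] x Hx; have [r Er] := Hsurj x; subst x.
  apply/Hker; apply: (aC s Ss); apply/Hker.
  by rewrite rmorphM.
have HB : forall r, f r = 0 <-> ass_l (img pi S) (pi r).
  move=> r; split.
    move/kerf => [s [Ss Hs]]; exists (pi s); split; first by exists s.
    by rewrite -rmorphM; apply/Hker.
  move=> [t [[s [Ss <-]] E]].
  have : f (s * r) = 0 by apply: aker; apply/Hker; rewrite rmorphM.
  have [y [H1 H2]] := Hunit s Ss.
  by rewrite rmorphM => H; rewrite -[f r]mul1r -H2 -mulrA H mulr0.
split.
- split => //; split; last first.
    by move=> r s' Ts' E; exists 1; split; [exists 1; rewrite rmorph1 | rewrite mul1r; apply: HlC Ts' r E].
  split.
  + split.
    * by exists 1; rewrite rmorph1.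
    * move=> [s [Ss Es]]; apply: Hna => x; apply: (aC s Ss).
      by have := (Hker s).1 Es; move=> Hs; case: (aM x _ Hs).
    * by move=> _ _ [x [Sx <-]] [y [Sy <-]]; exists (x * y); rewrite rmorphM; split => //; apply: SM.
  + move=> r' _ [s [Ss <-]]; have [r <-] := Hsurj r'.
    have [s1 [r1 [Ss1 E]]] := Ore r s Ss.
    exists (pi s1), (pi r1); split; first by exists s1.
    by rewrite -!rmorphM E.
- exact: HB.
move=> Q g [Qunit Qform Qker].
have gU : forall s, S s -> is_unit ((g \o pi) s).
  by move=> s Ss; apply: Qunit; exists s.
have [k [Hk _]] := HU.2 Q (g \o pi) gU.
exists k; split; last exact: Hk.
have Hk' : forall r, k (f r) = g (pi r) := Hk.
have kinj : forall x, k x = 0 -> x = 0.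
  move=> x; have [s [r [y [Ss H1 H2 ->]]]] := form x.
  rewrite rmorphM Hk => E.
  have E2 : g (pi r) = 0.
    by rewrite -[g (pi r)]mul1r -(rmorph1 k) -H2 rmorphM Hk -mulrA E mulr0.
  have : f r = 0 by apply/HB; apply/Qker.
  by move=> ->; rewrite mulr0.
have ksurj : forall q, exists x, k x = q.
  move=> q; have [t [a [y [[s [Ss Et]] H1 H2 ->]]]] := Qform q.
  have [r Er] := Hsurj a; subst a t.
  have [ys [Hs1 Hs2]] := Hunit s Ss.
  exists (ys * f r); rewrite rmorphM Hk; congr (_ * _).
  rewrite -[k ys]mul1r -H1 -Hk' -mulrA -rmorphM Hs1 rmorph1 mulr1 //.
pose kinv q := epsilon (inhabits 0) (fun x => k x = q).
have kinvK : forall q, k (kinv q) = q.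
  by move=> q; rewrite /kinv; apply epsilon_spec; apply: ksurj.
exists kinv => [x|q]; last exact: kinvK.
apply/eqP; rewrite -subr_eq0; apply/eqP; apply: kinj.
by rewrite rmorphB kinvK subrr.
Qed.
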